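(* Let $\gamma\in[0,1]$, $\theta>0$, and let $\alpha,\beta_0,\beta$ be real numbers with $\alpha\ge-1$. Suppose $$\theta\ge\max\Big\{\beta,\ \frac{|\beta_0|\gamma+\beta}{1+\sqrt{1+\alpha}}\Big\}.$$ Then for all real $z_0,z_1,z_2$ satisfying $z_1\le0$, $z_2\le0$, $z_0+z_1+z_2\le0$ and $|z_0|\le2\gamma\sqrt{z_1z_2}$, one has $$p+\alpha+\beta_0z_0+\beta(z_1+z_2)\ge0,\qquad\text{where } p=(1-\theta z_1)(1-\theta z_2).$$ *)

(* Defs.v *)
From Stdlib Require Import Reals.
Open Scope R_scope.

(* Main.v *)
Require Import Defs.
From Stdlib Require Import Reals Lra Psatz.
Open Scope R_scope.

Theorem lemma1 (gamma theta alpha beta0 beta : R)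
  (Hg0 : 0 <= gamma) (Hg1 : gamma <= 1) (Htheta : 0 < theta)
  (Halpha : -1 <= alpha)
  (Hth : theta >= Rmax beta ((Rabs beta0 * gamma + beta) / (1 + sqrt (1 + alpha)))) :
  forall z0 z1 z2 : R,
    z1 <= 0 -> z2 <= 0 -> z0 + z1 + z2 <= 0 ->
    Rabs z0 <= 2 * gamma * sqrt (z1 * z2) ->
    (1 - theta * z1) * (1 - theta * z2) + alpha + beta0 * z0 + beta * (z1 + z2) >= 0.
Proof.
  intros z0 z1 z2 H1 H2 H3 H4.
  assert (Hz : 0 <= z1 * z2) by nra.
  set (s := sqrt (z1 * z2)) in *.
  set (c := sqrt (1 + alpha)) in *.
  assert (Hs0 : 0 <= s) by apply sqrt_pos.
  assert (Hs2 : s * s = z1 * z2) by (apply sqrt_sqrt; lra).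
  assert (Hc0 : 0 <= c) by apply sqrt_pos.
  assert (Hc2 : c * c = 1 + alpha) by (apply sqrt_sqrt; lra).
  assert (Hb : theta >= beta).
  { eapply Rge_trans; [exact Hth|]. apply Rle_ge, Rmax_l. }
  assert (HK : Rabs beta0 * gamma + beta <= theta * (1 + c)).
  { assert (H := Rmax_r beta ((Rabs beta0 * gamma + beta) / (1 + c))).
    assert (Hq : (Rabs beta0 * gamma + beta) / (1 + c) <= theta) by lra.
    apply (Rmult_le_compat_r (1 + c)) in Hq; [|lra].
    unfold Rdiv in Hq. rewrite Rmult_assoc, Rinv_l in Hq by lra. lra. }
  assert (Hab : 2 * s <= - z1 - z2).
  { destruct (Rle_or_lt (2 * s) (- z1 - z2)) as [h|h]; auto.
    assert (h2 : (- z1 - z2) * (- z1 - z2) < (2 * s) * (2 * s)) by (apply Rmult_le_0_lt_compat; lra).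
    assert (0 <= (z1 - z2) * (z1 - z2)) by apply Rle_0_sqr. lra. }
  assert (Hbz : - (Rabs beta0 * (2 * gamma * s)) <= beta0 * z0).
  { assert (Rabs beta0 * Rabs z0 <= Rabs beta0 * (2 * gamma * s))
      by (apply Rmult_le_compat_l; [apply Rabs_pos | exact H4]).
    assert (- (Rabs beta0 * Rabs z0) <= beta0 * z0).
    { rewrite <- Rabs_mult.
      pose proof (Rle_abs (- (beta0 * z0))). rewrite Rabs_Ropp in H0. lra. }
    lra. }
  assert (Hm : 0 <= (theta - beta) * (- z1 - z2 - 2 * s)) by nra.
  assert (Hm2 : (Rabs beta0 * gamma + beta) * s <= theta * (1 + c) * s) by nra.
  assert (Hsq : 0 <= (c - theta * s) * (c - theta * s)) by apply Rle_0_sqr.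
  assert (E1 : theta * theta * (z1 * z2) = theta * theta * (s * s)) by (rewrite Hs2; ring).
  apply Rle_ge.
  nra.
Qed.
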